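(* For all $n\ge1$, $a_{\{0101,0102,0112,0120,0121\}}(n)=(n-1)^2+1$.
   Context: An ascent in an integer sequence $s_1\cdots s_m$ is an index $j$ with $s_j<s_{j+1}$; $\mathrm{asc}$ denotes the number of ascents. An ascent sequence is a sequence $x_1\cdots x_n$ of nonnegative integers with $x_1=0$ and $x_i\le 1+\mathrm{asc}(x_1\cdots x_{i-1})$ for all $i\ge2$. The reduction $\mathrm{red}(w)$ of an integer sequence $w$ replaces the $i$-th smallest distinct letter of $w$ by $i-1$; a pattern is a reduced sequence. A sequence $x$ contains a pattern $p=p_1\cdots p_k$ if there are indices $i_1<\cdots<i_k$ with $\mathrm{red}(x_{i_1}\cdots x_{i_k})=p$; otherwise $x$ avoids $p$. For a finite set $P$ of patterns, $a_P(n)$ denotes the number of ascent sequences of length $n$ avoiding every pattern in $P$. *)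

(* Defs.v *)
From mathcomp Require Import all_boot.
Set Implicit Arguments. Unset Strict Implicit. Unset Printing Implicit Defensive.

Fixpoint asc (s : seq nat) : nat :=
  match s with
  | a :: ((b :: _) as t) => (a < b) + asc t
  | _ => 0
  end.

Definition ascent_seq (x : seq nat) : bool :=
  (head 0 x == 0) &&
  [forall i : 'I_(size x), (0 < i) ==> (nth 0 x i <= (asc (take i x)).+1)].

Definition red (w : seq nat) : seq nat :=
  map (fun a => index a (sort leq (undup w))) w.

Definition contains (x p : seq nat) : bool :=
  [exists m : (size x).-tuple bool, red (mask m x) == p].

Definition avoids_all (P : seq (seq nat)) (x : seq nat) : bool :=
  all (fun p => ~~ contains x p) P.

(* a_P(n): number of ascent sequences of length n avoiding every pattern of P.
   Entries of an ascent sequence of length n are < n (x_i <= i-1), so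
   enumerating n-tuples with entries in 'I_n covers all of them. *)
Definition a_P (P : seq (seq nat)) (n : nat) : nat :=
  #|[set x : n.-tuple 'I_n |
       ascent_seq (map val x) && avoids_all P (map val x)]|.

(* Main.v *)
Require Import Defs.
From mathcomp Require Import all_boot zify.
Set Implicit Arguments. Unset Strict Implicit. Unset Printing Implicit Defensive.

Lemma containsP x p : reflect (exists2 s, subseq s x & red s = p) (contains x p).
Proof.
apply: (iffP existsP) => [[m /eqP Hm]|[s /subseqP [m Hsz ->] Hr]].
  by exists (mask m x) => //; apply: mask_subseq.
have Hm : size m == size x by apply/eqP.
by exists (Tuple Hm); apply/eqP.
Qed.

Lemma subseq_catP (s x y : seq nat) : subseq s (x ++ y) ->
  exists s1 s2, [/\ s = s1 ++ s2, subseq s1 x & subseq s2 y].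
Proof.
move=> /subseqP [m Hsz ->].
exists (mask (take (size x) m) x), (mask (drop (size x) m) y).
split.
- rewrite -mask_cat ?cat_take_drop //.
  rewrite size_take Hsz size_cat; case: ltnP => // H; by apply/eqP; rewrite eqn_leq H leq_addr.
- exact: mask_subseq.
- exact: mask_subseq.
Qed.

Lemma red_mono (f : nat -> nat) s : {homo f : i j / i < j} ->
  red (map f s) = red s.
Proof.
move=> Hf.
have Hm := leq_mono Hf.
have Hi := incn_inj Hm.
rewrite /red (undup_map_inj Hi) -(map_sort Hm).
rewrite -map_comp; apply: eq_map => a /=.
by rewrite index_map.
Qed.

Lemma red_lt (s : seq nat) (a b : nat) : a \in s -> b \in s ->
  (index a (sort leq (undup s)) < index b (sort leq (undup s))) = (a < b).
Proof.
set L := sort leq (undup s).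
have HL : sorted ltn L.
  by rewrite ltn_sorted_uniq_leq sort_uniq undup_uniq (sort_sorted leq_total).
have mem : forall c, c \in s -> c \in L by move=> c; rewrite mem_sort mem_undup.
move=> /mem Ha /mem Hb.
apply/idP/idP.
  exact: (sorted_ltn_index ltn_trans HL a b Ha Hb).
move=> Hab; rewrite ltnNge leq_eqVlt; apply/negP => /orP [/eqP E|H].
  have : nth 0 L (index a L) = nth 0 L (index b L) by rewrite E.
  by rewrite !nth_index // => E'; rewrite E' ltnn in Hab.
have := sorted_ltn_index ltn_trans HL b a Hb Ha H.
by rewrite ltnNge ltnW.
Qed.

Lemma asc_rcons a t v : asc (rcons (a :: t) v) = asc (a :: t) + (last a t < v).
Proof.
elim: t a => [|b t IH] a //=.
  by rewrite addn0.
move: IH; rewrite /= => IH.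
by rewrite IH; case: t {IH} => [|c t] /=; rewrite !addnA.
Qed.

Lemma ascent_allE x : ascent_seq x = (head 0 x == 0) &&
  all (fun i => (0 < i) ==> (nth 0 x i <= (asc (take i x)).+1)) (iota 0 (size x)).
Proof.
rewrite /ascent_seq; congr (_ && _).
apply/forallP/allP => [H i|H i].
  by rewrite mem_iota add0n => Hi; exact: (H (Ordinal Hi)).
by apply: H; rewrite mem_iota add0n ltn_ord.
Qed.

Lemma ascent_rcons y v : y != [::] -> ascent_seq (rcons y v) =
  ascent_seq y && (v <= (asc y).+1).
Proof.
move=> Hy.
have E k : iota 0 k.+1 = iota 0 k ++ [:: k] by rewrite -addn1 iotaD.
rewrite !ascent_allE size_rcons E all_cat all_seq1.
have -> : head 0 (rcons y v) = head 0 y by case: y Hy.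
have -> : all (fun i => (0 < i) ==> (nth 0 (rcons y v) i <= (asc (take i (rcons y v))).+1))
   (iota 0 (size y)) =
   all (fun i => (0 < i) ==> (nth 0 y i <= (asc (take i y)).+1)) (iota 0 (size y)).
  apply: eq_in_all => i; rewrite mem_iota add0n leq0n /= => Hi.
  by rewrite nth_rcons Hi -cats1 takel_cat // ltnW.
rewrite nth_rcons ltnn eqxx -cats1 take_size_cat // andbA.
by case: y Hy.
Qed.

Lemma ascent1 v : ascent_seq [:: v] = (v == 0).
Proof. by rewrite ascent_allE /= andbT. Qed.

Lemma asc_cat a s b t : asc ((a :: s) ++ (b :: t)) = asc (a :: s) + (last a s < b) + asc (b :: t).
Proof.
elim: s a => [|c s IH] a; first by rewrite /= add0n.
rewrite cat_cons.
have -> : asc (a :: (c :: s) ++ b :: t) = (a < c) + asc ((c :: s) ++ b :: t) by [].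
by rewrite IH /= !addnA.
Qed.

Lemma asc_cons_nseq x k : asc (x :: nseq k x) = 0.
Proof. by elim: k => [|k IH] //=; rewrite ltnn. Qed.

Lemma asc_nseq x k : asc (nseq k x) = 0.
Proof. by case: k => [|k] //; apply: asc_cons_nseq. Qed.

Lemma last_nseq_same (x : nat) k : last x (nseq k x) = x.
Proof. by elim: k. Qed.

Lemma last_iota (d i k : nat) : last d (iota i k.+1) = i + k.
Proof.
elim: k d i => [|k IH] d i; first by rewrite addn0.
have -> : last d (iota i k.+2) = last i (iota i.+1 k.+1) by [].
by rewrite IH addSnnS.
Qed.

Lemma asc_iota i k : asc (iota i k) = k.-1.
Proof.
elim: k i => [|k IH] i //.
case: k IH => [|k] IH //.
have -> : asc (iota i k.+2) = (i < i.+1) + asc (iota i.+1 k.+1) by [].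
by rewrite IH ltnSn.
Qed.

Lemma nseq_rcons k (x : nat) : rcons (nseq k x) x = nseq k.+1 x.
Proof. by elim: k => //= k ->. Qed.

Lemma iota_rcons i k : rcons (iota i k) (i + k) = iota i k.+1.
Proof. by rewrite -cats1 -addn1 iotaD. Qed.

Definition shB a b c := nseq a 0 ++ nseq b 1 ++ nseq c 0.
Definition shC a m r := nseq a 0 ++ iota 1 m ++ nseq r m.

Lemma asc_shB a b c : 0 < a -> 0 < b -> asc (shB a b c) = 1.
Proof.
case: a => // a _; case: b => // b _.
rewrite /shB.
change (asc ((0 :: nseq a 0) ++ (1 :: nseq b 1 ++ nseq c 0)) = 1).
rewrite asc_cat asc_cons_nseq last_nseq_same.
case: c => [|c]; first by rewrite cats0 asc_cons_nseq.
change (1 + asc ((1 :: nseq b 1) ++ (0 :: nseq c 0)) = 1).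
by rewrite asc_cat !asc_cons_nseq last_nseq_same.
Qed.

Lemma asc_shC a m r : 0 < a -> asc (shC a m r) = m.
Proof.
case: a => // a _; rewrite /shC.
case: m => [|m].
  by rewrite cat0s -nseqD asc_nseq.
change (asc ((0 :: nseq a 0) ++ (1 :: iota 2 m ++ nseq r m.+1)) = m.+1).
rewrite asc_cat asc_cons_nseq last_nseq_same.
case: r => [|r].
  by rewrite cats0 (asc_iota 1 m.+1).
change (1 + asc ((1 :: iota 2 m) ++ (m.+1 :: nseq r m.+1)) = m.+1).
rewrite asc_cat asc_cons_nseq (asc_iota 1 m.+1).
have -> : last 1 (iota 2 m) = m.+1 by case: m => // m; rewrite last_iota.
by rewrite ltnn /= !addn0 add1n.
Qed.

Lemma shB_nil a b c : 0 < a -> shB a b c != [::].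
Proof. by case: a. Qed.

Lemma shC_nil a m r : 0 < a -> shC a m r != [::].
Proof. by case: a. Qed.

Lemma ascent_nseq k : 0 < k -> ascent_seq (nseq k 0).
Proof.
case: k => // k _; elim: k => [|k IH]; first by rewrite ascent1.
by rewrite -nseq_rcons ascent_rcons ?IH.
Qed.

Lemma shB_rcons0 a b c : rcons (shB a b c) 0 = shB a b c.+1.
Proof. by rewrite /shB !rcons_cat nseq_rcons. Qed.

Lemma shB_rcons1 a b : rcons (shB a b 0) 1 = shB a b.+1 0.
Proof. by rewrite /shB !cats0 rcons_cat nseq_rcons. Qed.

Lemma shC_rconsm a m r : rcons (shC a m r) m = shC a m r.+1.
Proof. by rewrite /shC !rcons_cat nseq_rcons. Qed.

Lemma shC_rconsS a m : rcons (shC a m 0) m.+1 = shC a m.+1 0.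
Proof. by rewrite /shC !cats0 rcons_cat -add1n iota_rcons. Qed.

Lemma ascent_shB a b c : 0 < a -> 0 < b -> ascent_seq (shB a b c).
Proof.
move=> Ha Hb; elim: c => [|c IH].
  case: b Hb => // b _; elim: b => [|b IH].
    have -> : shB a 1 0 = rcons (nseq a 0) 1 by rewrite /shB /= cats1.
    by rewrite ascent_rcons ?ascent_nseq //; case: a Ha.
  by rewrite -shB_rcons1 ascent_rcons ?IH ?shB_nil.
by rewrite -shB_rcons0 ascent_rcons ?IH ?shB_nil.
Qed.

Lemma ascent_shC a m r : 0 < a -> ascent_seq (shC a m r).
Proof.
move=> Ha; elim: r => [|r IH].
  elim: m => [|m IH].
    by rewrite /shC /= cats0 ascent_nseq.
  by rewrite -shC_rconsS ascent_rcons ?IH ?shC_nil // asc_shC // ltnSn.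
by rewrite -shC_rconsm ascent_rcons ?shC_nil // IH asc_shC // leqnSn.
Qed.

Definition Pats : seq (seq nat) := [:: [:: 0; 1; 0; 1]; [:: 0; 1; 0; 2]; [:: 0; 1; 1; 2];
          [:: 0; 1; 2; 0]; [:: 0; 1; 2; 1]].

Definition bad (a b c d : nat) := [|| (c == a) && (d == b), (c == a) && (b < d),
  (c == b) && (b < d), (b < c) && (d == a) | (b < c) && (d == b)].

Lemma pats_bad x1 x2 x3 x4 : [:: x1; x2; x3; x4] \in Pats -> (x1 < x2) && bad x1 x2 x3 x4.
Proof.
move=> H.
exact: (allP (isT : all (fun q => (nth 0 q 0 < nth 0 q 1) &&
       bad (nth 0 q 0) (nth 0 q 1) (nth 0 q 2) (nth 0 q 3)) Pats) _ H).
Qed.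

Lemma red4 a b c d : exists g : nat -> nat,
  red [:: a; b; c; d] = [:: g a; g b; g c; g d] /\
  forall u w, u \in [:: a; b; c; d] -> w \in [:: a; b; c; d] -> (g u < g w) = (u < w).
Proof.
exists (fun u => index u (sort leq (undup [:: a; b; c; d]))); split => //.
by move=> u w Hu Hw; apply: red_lt.
Qed.

Lemma avoid_of x : (forall a b c d, subseq [:: a; b; c; d] x -> a < b -> ~~ bad a b c d) ->
  avoids_all Pats x.
Proof.
move=> H.
have K : forall s, subseq s x -> red s \in Pats -> False.
  move=> s Hs Hr.
  have /eqP S4 := allP (isT : all (fun p => size p == 4) Pats) _ Hr.
  rewrite size_map in S4.
  case: s Hs Hr S4 => [|a [|b [|c [|d [|e s]]]]] Hs Hr S4; try discriminate S4.
  have [g [Er Hlt]] := red4 a b c d.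
  have Heq : forall u w, u \in [:: a; b; c; d] -> w \in [:: a; b; c; d] ->
      (g u == g w) = (u == w).
    move=> u w Hu Hw; have E1 := Hlt u w Hu Hw; have E2 := Hlt w u Hw Hu.
    case: (ltngtP u w) E1 E2 => [h|h|->] E1 E2; last by rewrite !eqxx.
      by apply: ltn_eqF; rewrite E1.
    by apply: gtn_eqF; rewrite E2.
  rewrite Er in Hr.
  have Hall := pats_bad Hr.
  have Ma : a \in [:: a; b; c; d] by rewrite !inE eqxx.
  have Mb : b \in [:: a; b; c; d] by rewrite !inE eqxx !orbT.
  have Mc : c \in [:: a; b; c; d] by rewrite !inE eqxx !orbT.
  have Md : d \in [:: a; b; c; d] by rewrite !inE eqxx !orbT.
  move: Hall; rewrite /bad (Heq c a) // (Heq d b) // (Heq c b) // (Heq d a) //.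
  rewrite (Hlt a b) // (Hlt b d) // (Hlt b c) // => /andP [Hab Hb].
  by move: (H a b c d Hs Hab); rewrite /bad Hb.
apply/allP => p Hp; apply/containsP => [[s Hs Hr]].
by apply: (K s Hs); rewrite Hr.
Qed.

Lemma path_nseq (e : rel nat) x y k : e x y -> e y y -> path e x (nseq k y).
Proof. by elim: k x => [|k IH] x //= -> Hy; rewrite IH. Qed.

Lemma sorted_geq_w b c : sorted geq (nseq b 1 ++ nseq c 0).
Proof.
case: b => [|b] /=.
  by case: c => //= c; apply: path_nseq.
by rewrite cat_path last_nseq_same !path_nseq.
Qed.

Lemma sorted_shC a m r : 0 < a -> sorted leq (shC a m r).
Proof.
case: a => // a _; rewrite /shC /= cat_path last_nseq_same path_nseq //=.
rewrite cat_path.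
case: m => [|m] /=; first by apply: path_nseq.
rewrite (_ : path leq 1 (iota 2 m) = true); last exact: (iota_sorted 1 m.+1).
have -> : last 1 (iota 2 m) = m.+1 by case: m => // m; rewrite last_iota.
by rewrite path_nseq.
Qed.

Lemma mem_shB u a b c : u \in shB a b c -> u <= 1.
Proof. by rewrite /shB !mem_cat !mem_nseq => /or3P [] /andP [_ /eqP ->]. Qed.

Lemma avoid_nseq k : avoids_all Pats (nseq k 0).
Proof.
apply: avoid_of => a b c d Hs.
have Ha : a \in nseq k 0 by apply: (mem_subseq Hs); rewrite inE eqxx.
have Hb : b \in nseq k 0 by apply: (mem_subseq Hs); rewrite !inE eqxx orbT.
by move: Ha Hb; rewrite !mem_nseq => /andP [_ /eqP ->] /andP [_ /eqP ->].
Qed.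

Lemma avoid_shB a0 b0 c0 : avoids_all Pats (shB a0 b0 c0).
Proof.
apply: avoid_of => a b c d Hs Hab.
have M : forall u, u \in [:: a; b; c; d] -> u <= 1.
  by move=> u Hu; apply: (@mem_shB u a0 b0 c0); apply: (mem_subseq Hs).
have Ha := M a; have Hb := M b; have Hc := M c; have Hd := M d.
rewrite !inE !eqxx ?orbT in Ha Hb Hc Hd.
have Hcd : d <= c.
  move: Hs; rewrite /shB => /subseq_catP [s1 [s2 [E H1 H2]]].
  have G := subseq_sorted (fun y x z (h1 : x >= y) (h2 : y >= z) => leq_trans h2 h1) H2 (sorted_geq_w b0 c0).
  case: s1 E H1 => [|u [|v s1]] /= E H1.
  - by rewrite -E /= in G; case/and4P: G.
  - by case: E => _ E; rewrite -E /= in G; case/and3P: G.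
  - case: E => _ Ev _.
    have : v \in nseq a0 0 by apply: (mem_subseq H1); rewrite !inE eqxx orbT.
    by rewrite mem_nseq -Ev => /andP [_ /eqP Eb]; rewrite Eb in Hab.
have -> : a = 0 by lia.
have -> : b = 1 by lia.
by clear Hs M Ha Hb; case: c Hc Hcd => [|[|c]] //; case: d Hd => [|[|d]].
Qed.

Lemma noBBD a0 m r b d : subseq [:: b; b; d] (shC a0 m r) -> 0 < b -> b < d -> False.
Proof.
rewrite /shC => /subseq_catP [s1 [s2 [E H1 H2]]] Hb Hbd.
case: s1 E H1 => [|u s1] E H1.
  move: H2; rewrite cat0s in E; rewrite -E => /subseq_catP [t1 [t2 [E' T1 T2]]].
  have G := subseq_sorted ltn_trans T1 (iota_ltn_sorted 1 m).
  have Mm : forall u, u \in t2 -> u = m.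
    by move=> u /(mem_subseq T2); rewrite mem_nseq => /andP [_ /eqP].
  case: t1 E' T1 G => [|u [|v t1]] /= E' T1 G.
  - have Hd' : d = m by apply: Mm; rewrite -E' !inE eqxx !orbT.
    have Hb' : b = m by apply: Mm; rewrite -E' !inE eqxx.
    lia.
  - case: E' => _ E'.
    have Hd' : d = m by apply: Mm; rewrite -E' !inE eqxx !orbT.
    have Hb' : b = m by apply: Mm; rewrite -E' !inE eqxx.
    lia.
  - by case: E' => Eu Ev _; rewrite -Eu -Ev /= ltnn in G.
case: E => Eu _.
have : u \in nseq a0 0 by apply: (mem_subseq H1); rewrite inE eqxx.
by rewrite mem_nseq -Eu => /andP [_ /eqP Eb]; rewrite Eb in Hb.
Qed.

Lemma avoid_shC a0 m r : 0 < a0 -> avoids_all Pats (shC a0 m r).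
Proof.
move=> Ha0; apply: avoid_of => a b c d Hs Hab.
have G := subseq_sorted leq_trans Hs (sorted_shC m r Ha0).
move: G => /= /and4P [H1 H2 H3 _].
rewrite /bad; apply/negP => /orP [/andP [/eqP E1 _]|/orP [/andP [/eqP E1 _]|/orP [/andP [/eqP E1 E2]|/orP [/andP [E1 /eqP E2]|/andP [E1 /eqP E2]]]]].
- lia.
- lia.
- apply: (@noBBD a0 m r b d) => //; last lia.
  apply: subseq_trans Hs; rewrite E1.
  by rewrite -[[:: b; b; d]]cat0s -[[:: a; b; b; d]]/([:: a] ++ [:: b; b; d]) cat_subseq ?sub0seq.
- lia.
- lia.
Qed.

Definition valid x := ascent_seq x && avoids_all Pats x.

Definition Shape (x : seq nat) : Prop :=
  (exists k, 0 < k /\ x = nseq k 0) \/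
  (exists a b c, [/\ 0 < a, 0 < b & x = shB a b c]) \/
  (exists a m r, [/\ 0 < a, 1 < m & x = shC a m r]).

Lemma shape_valid x : Shape x -> valid x.
Proof.
rewrite /valid.
case=> [[k [Hk ->]]|[[a [b [c [Ha Hb ->]]]]|[a [m [r [Ha Hm ->]]]]]].
- by rewrite ascent_nseq // avoid_nseq.
- by rewrite ascent_shB // avoid_shB.
- by rewrite ascent_shC // avoid_shC.
Qed.

Lemma valid_prefix y v : y != [::] -> valid (rcons y v) -> valid y /\ v <= (asc y).+1.
Proof.
move=> Hy /andP [Ha Hav]; move: Ha; rewrite ascent_rcons // => /andP [Ha Hv].
split => //; rewrite /valid Ha andTb.
apply/allP => p Hp; apply/negP => /containsP [s Hs Hr].
have := allP Hav p Hp; rewrite /= => /negP; apply; apply/containsP.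
by exists s => //; apply: subseq_trans Hs (subseq_rcons y v).
Qed.

Lemma ext_contra y v s : subseq s y -> red (rcons s v) \in Pats -> valid (rcons y v) -> False.
Proof.
move=> Hs Hr /andP [_ Hav].
have := allP Hav _ Hr; rewrite /= => /negP; apply; apply/containsP.
exists (rcons s v) => //.
by rewrite -!cats1 cat_subseq.
Qed.

Definition f3 u w i := match i with 0 => 0 | 1 => u | k.+2 => w + k end.

Lemma f3_homo u w : 0 < u -> u < w -> {homo f3 u w : i j / i < j}.
Proof.
move=> Hu Huw.
apply: (@homo_ltn _ _ (fun a b => a < b)); first by move=> y x z; apply: ltn_trans.
by case=> [|[|k]] /=; lia.
Qed.

Lemma sub3 (u w z : nat) X Y Z : u \in X -> w \in Y -> z \in Z -> subseq [:: u; w; z] (X ++ Y ++ Z).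
Proof.
move=> Hu Hw Hz.
rewrite -[[:: u; w; z]]/([:: u] ++ [:: w] ++ [:: z]).
by rewrite !cat_subseq ?sub1seq.
Qed.

Lemma valid_shape x : x != [::] -> valid x -> Shape x.
Proof.
elim/last_ind: x => [|y v IH] // _ Hv.
case: (eqVneq y [::]) => [Ey|Hy].
  move: Hv; rewrite Ey /valid /= ascent1 => /andP [/eqP -> _].
  by left; exists 1.
have [Vy Hasc] := valid_prefix Hy Hv.
have M0 : forall a, 0 < a -> 0 \in nseq a 0 by move=> a Ha; rewrite mem_nseq Ha eqxx.
case: (IH Hy Vy) => [[k [Hk Ey]]|[[a [b [c [Ha Hb Ey]]]]|[a [m [r [Ha Hm Ey]]]]]];
  subst y; clear IH Vy Hy.
- rewrite asc_nseq in Hasc.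
  case: v Hv Hasc => [|[|v]] Hv Hasc //.
    by left; exists k.+1; rewrite nseq_rcons.
  by right; left; exists k, 1, 0; split => //; rewrite /shB cats1.
- rewrite asc_shB // in Hasc.
  case: v Hv Hasc => [|v] Hv Hasc.
    by right; left; exists a, b, c.+1; rewrite shB_rcons0.
  case: c Hv => [|c] Hv.
    case: v Hv Hasc => [|[|v]] Hv Hasc //.
      by right; left; exists a, b.+1, 0; rewrite shB_rcons1.
    case: b Hb Hv => [|[|b]] // _ Hv.
      by right; right; exists a, 2, 0; split => //; rewrite /shB /shC rcons_cat.
    exfalso; apply: (@ext_contra _ _ [:: 0; 1; 1] _ _ Hv).
      have -> : shB a b.+2 0 = nseq a 0 ++ [:: 1] ++ (1 :: nseq b 1) by rewrite /shB /= cats0.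
      by apply: sub3; rewrite ?M0 ?inE ?eqxx.
    by [].
  exfalso.
  case: v Hv Hasc => [|[|v]] Hv Hasc //.
    apply: (@ext_contra _ _ [:: 0; 1; 0] _ _ Hv) => //.
    by apply: sub3; rewrite ?M0 // ?mem_nseq ?Hb ?eqxx.
  apply: (@ext_contra _ _ [:: 0; 1; 0] _ _ Hv) => //.
  by apply: sub3; rewrite ?M0 // ?mem_nseq ?Hb ?eqxx.
- rewrite asc_shC // in Hasc.
  case: (ltngtP v m) => Hvm.
  + exfalso.
    case: v Hvm Hv Hasc => [|v] Hvm Hv Hasc.
      case: m Hm Hv Hasc Hvm => [|[|m]] // _ Hv Hasc _.
      apply: (@ext_contra _ _ [:: 0; 1; 2] _ _ Hv) => //.
      have -> : shC a m.+2 r = nseq a 0 ++ [:: 1] ++ (2 :: iota 3 m ++ nseq r m.+2) by [].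
      by apply: sub3; rewrite ?M0 ?inE ?eqxx.
    apply: (@ext_contra _ _ [:: 0; v.+1; m] _ _ Hv).
      have Ei : iota 1 m = iota 1 v.+1 ++ iota (1 + v.+1) (m - v.+1) by rewrite -iotaD subnKC // ltnW.
      rewrite /shC Ei -catA.
      apply: sub3; rewrite ?M0 // ?mem_iota ?mem_cat ?mem_iota //; first lia.
      by apply/orP; left; apply/andP; split; lia.
    have -> : rcons [:: 0; v.+1; m] v.+1 = map (f3 v.+1 m) [:: 0; 1; 2; 1] by rewrite /= addn0.
    by rewrite red_mono //; apply: f3_homo.
  + have Ev : v = m.+1 by lia.
    rewrite Ev in Hv *.
    case: r Hv => [|r] Hv.
      by right; right; exists a, m.+1, 0; split => //; [lia | rewrite shC_rconsS].
    exfalso; apply: (@ext_contra _ _ [:: 0; m; m] _ _ Hv).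
      by apply: sub3; rewrite ?M0 // ?mem_iota ?mem_nseq //; lia.
    have -> : rcons [:: 0; m; m] m.+1 = map (f3 m m.+1) [:: 0; 1; 1; 2] by rewrite /= addn0.
    by rewrite red_mono //; apply: f3_homo; lia.
  + rewrite Hvm.
    by right; right; exists a, m, r.+1; rewrite shC_rconsm.
Qed.

Lemma card_tuples n (L : seq (seq nat)) (Q : pred (seq nat)) : uniq L ->
  (forall y, y \in L -> size y = n /\ all (fun u => u < n) y) ->
  (forall y, size y = n -> all (fun u => u < n) y -> Q y = (y \in L)) ->
  #|[set x : n.-tuple 'I_n | Q (map val x)]| = size L.
Proof.
move=> UL HL HQ.
set h := fun x : n.-tuple 'I_n => map val (val x).
have inj : injective h.
  by move=> x1 x2 /(inj_map val_inj) E; apply: val_inj.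
rewrite cardE -(size_map h); apply: perm_size; apply: uniq_perm => //.
  by rewrite map_inj_uniq // enum_uniq.
move=> y; apply/mapP/idP => [[x Hx ->]|Hy].
  rewrite mem_enum inE in Hx.
  rewrite -HQ // ?size_map ?size_tuple //.
  by apply/allP => u; rewrite /h => /mapP [i _ ->]; apply: ltn_ord.
have [Sy Ay] := HL y Hy.
have E : map val (pmap (insub : nat -> option 'I_n) y) = y.
  by rewrite (pmap_filter (@insubK _ _ _)); apply/all_filterP;
     apply: sub_all Ay => u Hu; rewrite insubT.
have St : size (pmap (insub : nat -> option 'I_n) y) == n.
  by rewrite -(size_map val) E Sy.
exists (Tuple St); last by rewrite /h /= E.
by rewrite mem_enum inE /= E HQ.
Qed.

Definition idxB n : seq (nat * nat * nat) := [seq (1, a, b) | a <- iota 1 n, b <- iota 1 (n - a)].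
Definition idxC n : seq (nat * nat * nat) := [seq (2, a, m) | a <- iota 1 n, m <- iota 2 (n - a - 1)].
Definition idx n : seq (nat * nat * nat) := (0, 0, 0) :: (idxB n ++ idxC n).

Definition enc n (t : nat * nat * nat) : seq nat :=
  let: (i, a, b) := t in
  if i == 0 then nseq n 0 else if i == 1 then shB a b (n - a - b) else shC a b (n - a - b).

Definition gen n := map (enc n) (idx n).

Definition G n := sumn [seq n - a | a <- iota 1 n].
Definition H n := sumn [seq n - a - 1 | a <- iota 1 n].

Lemma G_S n : G n.+1 = n + G n.
Proof.
rewrite /G.
have -> : iota 1 n.+1 = 1 :: map (addn 1) (iota 1 n) by rewrite -iotaDl.
by rewrite /= -map_comp subn1; congr (_ + sumn _); apply: eq_map => a /=; rewrite add1n subSS.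
Qed.

Lemma H_S n : H n.+1 = n.-1 + H n.
Proof.
rewrite /H.
have -> : iota 1 n.+1 = 1 :: map (addn 1) (iota 1 n) by rewrite -iotaDl.
by rewrite /= -map_comp !subn1; congr (_ + sumn _); apply: eq_map => a /=; rewrite add1n subSS.
Qed.

Lemma GH n : G n + H n = (n - 1) ^ 2.
Proof.
elim: n => [|n IH] //.
rewrite G_S H_S.
case: n IH => [|n] IH //=.
rewrite subn1 /= in IH *.
nia.
Qed.

Lemma size_idx n : size (idx n) = (n - 1) ^ 2 + 1.
Proof.
rewrite /= size_cat /idxB /idxC !size_allpairs_dep -GH /G /H.
have -> : [seq size (iota 1 (n - a)) | a <- iota 1 n] = [seq n - a | a <- iota 1 n].
  by apply: eq_map => a; rewrite size_iota.
have -> : [seq size (iota 2 (n - a - 1)) | a <- iota 1 n] = [seq n - a - 1 | a <- iota 1 n].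
  by apply: eq_map => a; rewrite size_iota.
by rewrite addn1.
Qed.

Lemma uniq_idx n : uniq (idx n).
Proof.
rewrite /idx cons_uniq cat_uniq mem_cat negb_or.
have UB : uniq (idxB n).
  apply: allpairs_uniq_dep; rewrite ?iota_uniq //; first by move=> x _; apply: iota_uniq.
  by move=> [x1 y1] [x2 y2] _ _ /= [-> ->].
have UC : uniq (idxC n).
  apply: allpairs_uniq_dep; rewrite ?iota_uniq //; first by move=> x _; apply: iota_uniq.
  by move=> [x1 y1] [x2 y2] _ _ /= [-> ->].
rewrite UB UC andbT.
have -> : (0, 0, 0) \in idxB n = false.
  by apply/negP => /allpairsPdep [a [b [_ _ E]]].
have -> : (0, 0, 0) \in idxC n = false.
  by apply/negP => /allpairsPdep [a [b [_ _ E]]].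
rewrite /=.
apply/hasPn => t /allpairsPdep [a [m [_ _ ->]]].
by apply/negP => /allpairsPdep [a' [b' [_ _ E]]].
Qed.

Definition dec (x : seq nat) : nat * nat * nat :=
  if 2 \in x then (2, find (fun v => v != 0) x, last 0 x)
  else if 1 \in x then (1, find (fun v => v != 0) x, count_mem 1 x)
  else (0, 0, 0).

Lemma last_nseqS (d x : nat) k : last d (nseq k.+1 x) = x.
Proof. by rewrite /= last_nseq_same. Qed.

Lemma mem_idxB n t : t \in idxB n -> exists a b, [/\ t = (1, a, b), 0 < a, 0 < b & a + b <= n].
Proof.
move=> /allpairsPdep [a [b [Ha Hb ->]]]; exists a, b.
by move: Ha Hb; rewrite !mem_iota; split => //; lia.
Qed.

Lemma mem_idxC n t : t \in idxC n -> exists a m, [/\ t = (2, a, m), 0 < a, 1 < m & a + m <= n].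
Proof.
move=> /allpairsPdep [a [b [Ha Hb ->]]]; exists a, b.
by move: Ha Hb; rewrite !mem_iota; split => //; lia.
Qed.

Lemma last_shC a m r : 0 < m -> last 0 (shC a m r) = m.
Proof.
case: m => // m _; rewrite /shC !last_cat.
case: r => [|r]; last by rewrite last_nseqS.
change (last (last 0 (nseq a 0)) (iota 1 m.+1) = m.+1); by rewrite last_iota add1n.
Qed.

Lemma dec_enc n t : t \in idx n -> dec (enc n t) = t.
Proof.
rewrite inE mem_cat => /orP [/eqP ->|/orP [/mem_idxB [a [b [-> Ha Hb Hn]]]|/mem_idxC [a [m [-> Ha Hm Hn]]]]].
- by rewrite /dec /enc /= !mem_nseq !andbF.
- rewrite /dec /enc /= /shB.
  have -> : 2 \in nseq a 0 ++ nseq b 1 ++ nseq (n - a - b) 0 = false.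
    by rewrite !mem_cat !mem_nseq /= !andbF.
  rewrite !mem_cat !mem_nseq eqxx Hb /= orbT.
  rewrite !find_cat !has_nseq /= andbF size_nseq Hb.
  case: b Hb {Hn} => // b _ /=.
  rewrite !count_cat /= !count_cat !count_nseq /=; congr (_, _, _); lia.
- rewrite /dec /enc /= /shC.
  have -> : 2 \in nseq a 0 ++ iota 1 m ++ nseq (n - a - m) m = true.
    by rewrite !mem_cat mem_iota; apply/orP; right; apply/orP; left; lia.
  rewrite !find_cat !has_nseq /= andbF size_nseq.
  case: m Hm Hn => [|m] // Hm Hn /=.
  rewrite (_ : last 0 _ = m.+1); first by congr (_, _, _); lia.
  exact: (@last_shC a m.+1 (n - a - m.+1)).
Qed.

Lemma uniq_gen n : uniq (gen n).
Proof.
rewrite /gen map_inj_in_uniq ?uniq_idx //.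
by move=> t1 t2 H1 H2 E; rewrite -(dec_enc H1) -(dec_enc H2) E.
Qed.

Lemma size_gen n : size (gen n) = (n - 1) ^ 2 + 1.
Proof. by rewrite size_map size_idx. Qed.

Lemma size_shB a b c : size (shB a b c) = a + b + c.
Proof. by rewrite /shB !size_cat !size_nseq addnA. Qed.

Lemma size_shC a m r : size (shC a m r) = a + m + r.
Proof. by rewrite /shC !size_cat !size_nseq size_iota addnA. Qed.

Lemma mem_shC u a m r : u \in shC a m r -> u <= m.
Proof.
rewrite /shC !mem_cat !mem_nseq mem_iota => /or3P [] /andP [] //.
  by move=> _ /eqP ->.
by move=> _ /eqP ->.
Qed.

Lemma gen_props n x : 0 < n -> x \in gen n ->
  [/\ Shape x, size x = n & all (fun u => u < n) x].
Proof.
move=> Hn /mapP [t]; rewrite inE mem_cat.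
case/orP => [/eqP ->|/orP [/mem_idxB [a [b [-> Ha Hb Hab]]]|/mem_idxC [a [m [-> Ha Hm Ham]]]]] ->.
- split; first by left; exists n.
    by rewrite size_nseq.
  by rewrite all_nseq Hn orbT.
- split; first by right; left; exists a, b, (n - a - b).
    by rewrite size_shB; lia.
  by apply/allP => u /mem_shB; lia.
- split; first by right; right; exists a, m, (n - a - m).
    by rewrite size_shC; lia.
  by apply/allP => u /mem_shC; lia.
Qed.

Lemma shape_gen n x : Shape x -> size x = n -> x \in gen n.
Proof.
move=> Sx Hs; apply/mapP.
case: Sx => [[k [Hk Ex]]|[[a [b [c [Ha Hb Ex]]]]|[a [m [r [Ha Hm Ex]]]]]].
- exists (0, 0, 0); first by rewrite inE eqxx.
  by rewrite Ex /= -Hs Ex size_nseq.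
- exists (1, a, b).
    rewrite inE mem_cat; apply/orP; right; apply/orP; left.
    apply/allpairsPdep; exists a, b; split => //; rewrite mem_iota;
    move: Hs; rewrite Ex size_shB; lia.
  rewrite Ex /=; have -> : n - a - b = c by move: Hs; rewrite Ex size_shB; lia.
  by [].
- exists (2, a, m).
    rewrite inE mem_cat; apply/orP; right; apply/orP; right.
    apply/allpairsPdep; exists a, m; split => //; rewrite mem_iota;
    move: Hs; rewrite Ex size_shC; lia.
  rewrite Ex /=; have -> : n - a - m = r by move: Hs; rewrite Ex size_shC; lia.
  by [].
Qed.

Theorem theorem5p3 (n : nat) : 1 <= n ->
  a_P [:: [:: 0; 1; 0; 1]; [:: 0; 1; 0; 2]; [:: 0; 1; 1; 2];
          [:: 0; 1; 2; 0]; [:: 0; 1; 2; 1]] n = (n - 1) ^ 2 + 1.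
Proof.
move=> Hn.
have -> : a_P [:: [:: 0; 1; 0; 1]; [:: 0; 1; 0; 2]; [:: 0; 1; 1; 2];
          [:: 0; 1; 2; 0]; [:: 0; 1; 2; 1]] n =
   #|[set x : n.-tuple 'I_n | valid (map val x)]| by [].
rewrite (@card_tuples n (gen n) valid) ?uniq_gen ?size_gen //.
  by move=> y /(gen_props Hn) [_ -> ->].
move=> y Sy Ay; apply/idP/idP => H.
  have Ne : y != [::] by apply/eqP => E; rewrite E in Sy; rewrite -Sy in Hn.
  exact: (shape_gen (valid_shape Ne H) Sy).
by have [S _ _] := gen_props Hn H; apply: shape_valid.
Qed.
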